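(* Let $A$ be a finite simple undirected graph, let $v\neq w$ be vertices of $A$, and let $d(v),d(w)$ denote the degrees of $v$ and $w$ in $A$. (i) If $\{v,w\}\notin E(A)$ and $A'$ is obtained from $A$ by inserting the edge $\{v,w\}$, then $|E(W(A'))\setminus E(W(A))|\le d(v)+d(w)$ and $|E(W(A))\setminus E(W(A'))|\le \min(d(v),d(w))$. (ii) If $\{v,w\}\in E(A)$ and $A'$ is obtained from $A$ by removing the edge $\{v,w\}$, then $|E(W(A'))\setminus E(W(A))|\le \min(d(v),d(w))$ and $|E(W(A))\setminus E(W(A'))|\le d(v)+d(w)$.
   Context: A wedge in a graph $G=(V,E)$ is a triple of nodes $u,v,w$ with $\{u,v\},\{v,w\}\in E$ and $\{u,w\}\notin E$, denoted $(v,\{u,w\})$. The wedge graph $W(G)$ has one vertex $n_{uv}$ for each edge $\{u,v\}\in E$, and an edge $\{n_{uv},n_{vw}\}$ for each wedge $(v,\{u,w\})$ of $G$. Edges of wedge graphs are compared via these names, i.e. $n_{uv}$ denotes the same vertex in $W(A)$ and $W(A')$ whenever $\{u,v\}$ is an edge of both graphs. *)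

(* Defs.v *)
From mathcomp Require Import all_boot.
Set Implicit Arguments. Unset Strict Implicit. Unset Printing Implicit Defensive.

Definition simple_graph (T : finType) (e : rel T) : Prop :=
  symmetric e /\ irreflexive e.

Definition deg (T : finType) (e : rel T) (v : T) : nat := #|[set u | e v u]|.

Definition edges (T : finType) (e : rel T) : {set {set T}} :=
  [set E : {set T} | [exists u, exists v, e u v && (E == [set u; v])]].

(* E(W(G)): for each wedge (v,{u,w}) (u,v,w distinct, {u,v},{v,w} in E,
   {u,w} not in E) the edge {n_uv, n_vw}, where vertices of W(G) are named
   by the edges of G. *)
Definition wedge_edges (T : finType) (e : rel T) : {set {set {set T}}} :=
  [set P : {set {set T}} | [exists u, exists v, exists w,
     [&& e u v, e v w, ~~ e u w, u != w &
         P == [set [set u; v]; [set v; w]]]]].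

Definition add_edge (T : finType) (e : rel T) (a b : T) : rel T :=
  fun x y => e x y || ((x == a) && (y == b)) || ((x == b) && (y == a)).

Definition del_edge (T : finType) (e : rel T) (a b : T) : rel T :=
  fun x y => e x y && ~~ (((x == a) && (y == b)) || ((x == b) && (y == a))).

(* Main.v *)
Require Import Defs.
From mathcomp Require Import all_boot.

Lemma wedgeP (T : finType) (e : rel T) P :
  reflect (exists u c x, [/\ e u c, e c x, ~~ e u x, u != x &
                            P = [set [set u; c]; [set c; x]]])
          (P \in wedge_edges e).
Proof.
rewrite inE; apply: (iffP existsP).
  by move=> [u /existsP[c /existsP[x /and5P[? ? ? ? /eqP ->]]]]; exists u, c, x.
move=> [u [c [x [? ? ? ? ->]]]]; exists u; apply/existsP; exists c.
by apply/existsP; exists x; apply/and5P; split.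
Qed.

Lemma s2C (T : finType) (a b : T) : [set a; b] = [set b; a].
Proof. exact: setUC. Qed.

Lemma card_sub2 (T U : finType) (A B : {set T}) (S : {set U}) (f g : T -> U) :
  S \subset f @: A :|: g @: B -> #|S| <= #|A| + #|B|.
Proof.
move=> /subset_leq_card H; apply: (leq_trans H); apply: (leq_trans (leq_card_setU _ _)).
by apply: leq_add; apply: leq_imset_card.
Qed.

Lemma card_sub1 (T U : finType) (A : {set T}) (S : {set U}) (f : T -> U) :
  S \subset f @: A -> #|S| <= #|A|.
Proof.
move=> /subset_leq_card H; apply: (leq_trans H); apply: leq_imset_card.
Qed.

Section S.
Variables (T : finType) (e : rel T) (v w : T).
Hypothesis sym : symmetric e.
Hypothesis irr : irreflexive e.
Hypothesis vw : v != w.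

Lemma addP x y : add_edge e v w x y ->
  e x y \/ (x = v /\ y = w) \/ (x = w /\ y = v).
Proof.
rewrite /add_edge => /orP[/orP[H|/andP[/eqP -> /eqP ->]]|/andP[/eqP -> /eqP ->]]; tauto.
Qed.

Lemma addI x y : e x y -> add_edge e v w x y.
Proof. by rewrite /add_edge => ->. Qed.

Lemma addN x y : ~~ add_edge e v w x y -> ~~ e x y.
Proof. by apply: contra; apply: addI. Qed.

Lemma delE x y : del_edge e v w x y -> e x y.
Proof. by case/andP. Qed.

Lemma delN x y : ~~ del_edge e v w x y -> e x y ->
  (x = v /\ y = w) \/ (x = w /\ y = v).
Proof.
move=> H E; move: H; rewrite /del_edge E /= negbK.
by case/orP => /andP[/eqP -> /eqP ->]; tauto.
Qed.

Lemma delI x y : e x y -> ~ (x = v /\ y = w) -> ~ (x = w /\ y = v) -> del_edge e v w x y.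
Proof.
move=> E H1 H2; rewrite /del_edge E /= negb_or.
by apply/andP; split; apply/negP => /andP[/eqP ? /eqP ?]; subst; tauto.
Qed.

Arguments addP {x y}.
Arguments addN {x y}.
Arguments delE {x y}.
Arguments delN {x y}.

Definition f1 x := [set [set v; w]; [set v; x]].
Definition f2 x := [set [set v; w]; [set w; x]].
Definition g x := [set [set v; x]; [set x; w]].
Definition N a := [set u | e a u].

Lemma inF1 x X : x \in N v -> X = f1 x -> X \in f1 @: N v :|: f2 @: N w.
Proof. by move=> H ->; rewrite in_setU imset_f. Qed.
Lemma inF2 x X : x \in N w -> X = f2 x -> X \in f1 @: N v :|: f2 @: N w.
Proof. by move=> H ->; rewrite in_setU orbC imset_f. Qed.
Lemma inGg a x X : x \in N a -> X = g x -> X \in g @: N a.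
Proof. by move=> H ->; rewrite imset_f. Qed.

Lemma add_new : wedge_edges (add_edge e v w) :\: wedge_edges e
   \subset f1 @: N v :|: f2 @: N w.
Proof.
apply/subsetP => P; rewrite in_setD => /andP[nA /wedgeP[u [c [x [Huc Hcx Hux ux PE]]]]]; subst P.
have Nux := addN Hux.
case/addP: Huc => [Euc|[[? ?]|[? ?]]].
- case/addP: Hcx => [Ecx|[[? ?]|[? ?]]].
  + by exfalso; move/negP: nA; apply; apply/wedgeP; exists u, c, x; split.
  + subst c x; apply: (inF1 u); first by rewrite inE sym.
    by rewrite /f1 setUC (s2C _ u v).
  + subst c x; apply: (inF2 u); first by rewrite inE sym.
    by rewrite /f2 setUC (s2C _ w v) (s2C _ u w).
- subst u c; case/addP: Hcx => [Ecx|[[E1 E2]|[E1 E2]]].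
  + apply: (inF2 x); first by rewrite inE.
    by [].
  + by move: vw; rewrite E1 eqxx.
  + by rewrite E2 eqxx in ux.
- subst u c; case/addP: Hcx => [Ecx|[[E1 E2]|[E1 E2]]].
  + apply: (inF1 x); first by rewrite inE.
    by rewrite /f1 (s2C _ w v).
  + by rewrite E2 eqxx in ux.
  + by move: vw; rewrite E1 eqxx.
Qed.

Lemma add_old a : a = v \/ a = w -> wedge_edges e :\: wedge_edges (add_edge e v w)
   \subset g @: N a.
Proof.
move=> Ha.
apply/subsetP => P; rewrite in_setD => /andP[nA /wedgeP[u [c [x [Huc Hcx Hux ux PE]]]]]; subst P.
have Aux : add_edge e v w u x.
  apply: contraNT nA => Nux; apply/wedgeP; exists u, c, x; split => //; exact: addI.
case/addP: Aux => [Eux|[[? ?]|[? ?]]]; first by rewrite Eux in Hux.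
- subst u x; apply: (@inGg _ c) => //.
  by case: Ha => ->; rewrite inE // sym.
- subst u x; apply: (@inGg _ c).
    by case: Ha => ->; rewrite inE // sym.
  by rewrite /g setUC (s2C _ c v) (s2C _ w c).
Qed.

Lemma del_new a : a = v \/ a = w -> wedge_edges (del_edge e v w) :\: wedge_edges e
   \subset g @: N a.
Proof.
move=> Ha.
apply/subsetP => P; rewrite in_setD => /andP[nA /wedgeP[u [c [x [Huc Hcx Hux ux PE]]]]]; subst P.
have Euc := delE Huc; have Ecx := delE Hcx.
have Eux : e u x.
  apply: contraNT nA => Nux; apply/wedgeP; exists u, c, x; split => //.
case: (delN Hux Eux) => [[? ?]|[? ?]]; subst u x.
- apply: (@inGg _ c) => //.
  by case: Ha => ->; rewrite inE // sym.
- apply: (@inGg _ c).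
    by case: Ha => ->; rewrite inE // sym.
  by rewrite /g setUC (s2C _ c v) (s2C _ w c).
Qed.

Lemma del_old : wedge_edges e :\: wedge_edges (del_edge e v w)
   \subset f1 @: N v :|: f2 @: N w.
Proof.
apply/subsetP => P; rewrite in_setD => /andP[nA /wedgeP[u [c [x [Euc Ecx Hux ux PE]]]]]; subst P.
have Dux : ~~ del_edge e v w u x by apply: contra Hux; apply: delE.
case Duc: (del_edge e v w u c).
- case Dcx: (del_edge e v w c x).
    by exfalso; move/negP: nA; apply; apply/wedgeP; exists u, c, x; split.
  case: (delN (negbT Dcx) Ecx) => [[? ?]|[? ?]]; subst c x.
  + apply: (inF1 u); first by rewrite inE sym.
    by rewrite /f1 setUC (s2C _ u v).
  + apply: (inF2 u); first by rewrite inE sym.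
    by rewrite /f2 setUC (s2C _ w v) (s2C _ u w).
- case: (delN (negbT Duc) Euc) => [[? ?]|[? ?]]; subst u c.
  + apply: (inF2 x); first by rewrite inE.
    by [].
  + apply: (inF1 x); first by rewrite inE.
    by rewrite /f1 (s2C _ w v).
Qed.

End S.

Theorem lemma2 (T : finType) (e : rel T) (v w : T) :
  simple_graph e -> v != w ->
  (~~ e v w ->
     #|wedge_edges (add_edge e v w) :\: wedge_edges e| <= deg e v + deg e w /\
     #|wedge_edges e :\: wedge_edges (add_edge e v w)| <= minn (deg e v) (deg e w)) /\
  (e v w ->
     #|wedge_edges (del_edge e v w) :\: wedge_edges e| <= minn (deg e v) (deg e w) /\
     #|wedge_edges e :\: wedge_edges (del_edge e v w)| <= deg e v + deg e w).
Proof.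
move=> [sym irr] vw; split=> _; rewrite leq_min /deg -/(N _ e v) -/(N _ e w); split.
- exact: card_sub2 (add_new _ _ _ _ sym vw).
- apply/andP; split.
    exact: card_sub1 (add_old _ _ _ _ sym _ (or_introl erefl)).
  exact: card_sub1 (add_old _ _ _ _ sym _ (or_intror erefl)).
- apply/andP; split.
    exact: card_sub1 (del_new _ _ _ _ sym _ (or_introl erefl)).
  exact: card_sub1 (del_new _ _ _ _ sym _ (or_intror erefl)).
- exact: card_sub2 (del_old _ _ _ _ sym).
Qed.
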